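(* Every Alster space is finitely powerfully Hurewicz, i.e., if $X$ is Alster then $X^k$ is Hurewicz for every positive integer $k$.
   Context: A topological space $X$ is Alster if every cover of $X$ by $G_\delta$ subsets of $X$ such that each compact subset of $X$ is included in some member of the cover has a countable subcover. A point-cofinite cover of a space is an infinite open cover such that each point of the space belongs to all but finitely many members of the cover. A space $X$ is Hurewicz if for each sequence $\{\mathcal{U}_n\}_{n<\omega}$ of open covers of $X$, none of which has a finite subcover, there are finite $\mathcal{F}_n\subseteq\mathcal{U}_n$ such that $\{\bigcup\mathcal{F}_n : n<\omega\}$ is a point-cofinite cover of $X$. Finite powers carry the product topology. No separation axioms are assumed. *)

(* Defs.v *)
From HB Require Import structures.
From mathcomp Require Import all_boot all_order all_algebra.
From mathcomp Require Import all_classical all_reals all_analysis.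
Set Implicit Arguments. Unset Strict Implicit. Unset Printing Implicit Defensive.
Local Open Scope classical_set_scope.

Definition Gdelta (T : topologicalType) (A : set T) : Prop :=
  exists U : nat -> set T, (forall n, open (U n)) /\ A = \bigcap_n U n.

Definition Alster (T : topologicalType) : Prop :=
  forall C : set (set T),
    (forall G, C G -> Gdelta G) ->
    \bigcup_(G in C) G = setT ->
    (forall K : set T, compact K -> exists2 G, C G & K `<=` G) ->
    exists2 D : set (set T), D `<=` C &
      countable D /\ \bigcup_(G in D) G = setT.

Definition open_cover (T : topologicalType) (U : set (set T)) : Prop :=
  (forall V, U V -> open V) /\ \bigcup_(V in U) V = setT.

Definition has_finite_subcover (T : topologicalType) (U : set (set T)) : Prop :=
  exists2 F : set (set T), F `<=` U & finite_set F /\ \bigcup_(V in F) V = setT.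

Definition point_cofinite_cover (T : topologicalType) (S : set (set T)) : Prop :=
  open_cover S /\ infinite_set S /\
  (forall x : T, finite_set [set V | S V /\ ~ V x]).

Definition Hurewicz (T : topologicalType) : Prop :=
  forall U : nat -> set (set T),
    (forall n, open_cover (U n) /\ ~ has_finite_subcover (U n)) ->
    exists F : nat -> set (set T),
      (forall n, F n `<=` U n /\ finite_set (F n)) /\
      point_cofinite_cover (range (fun n => \bigcup_(V in F n) V)).

Definition power (X : topologicalType) (k : nat) : topologicalType :=
  {ptws 'I_k -> X}.

(* Main.v *)
Require Import Defs.
From mathcomp Require Import all_boot all_order all_algebra.
From mathcomp Require Import all_classical all_reals all_analysis.
Set Implicit Arguments. Unset Strict Implicit. Unset Printing Implicit Defensive.
Local Open Scope classical_set_scope.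


Lemma compact_fincover (T : topologicalType) (K : set T) (U : set (set T)) :
  compact K -> (forall V, U V -> open V) -> K `<=` \bigcup_(V in U) V ->
  exists2 F, F `<=` U & finite_set F /\ K `<=` \bigcup_(V in F) V.
Proof.
move=> /compact_near_coveringP cK Uo KU.
pose D := [set D0 : set (set T) | D0 `<=` U /\ finite_set D0].
pose B := fun D0 : set (set T) => [set D' | D0 `<=` D' /\ D' `<=` U /\ finite_set D'].
have FF : Filter (filter_from D B).
  apply: filter_from_filter; first by exists set0; split => //; exact: finite_set0.
  move=> i j [iU fi] [jU fj]; exists (i `|` j).
    by split; [move=> x [/iU|/jU]|rewrite finite_setU].
  by move=> D' [ijD' [D'U fD']]; split; split => // x ?; apply: ijD'; [left|right].
have [] := cK _ (filter_from D B) (fun D' x => (\bigcup_(V in D') V) x) FF.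
- move=> x Kx; have [V UV Vx] := KU x Kx.
  exists (V, B [set V]) => /=; last first.
    move=> [x1 D1] /= [Vx1 [sVD1 _]]. exists V => //. apply: sVD1. done.
  split; first by apply: open_nbhs_nbhs; split => //; exact: Uo.
  exists [set V] => //; split; first by move=> ? ->.
  exact: finite_set1.
- move=> D0 [D0U fD0] sB.
  by exists D0 => //; split => //; apply: sB; split.
Qed.



Lemma tube_half (A B : topologicalType) (R : A -> B -> Prop) (K : set A) (L : set B) :
  compact L ->
  (forall y, L y -> exists P M, [/\ open P, K `<=` P, open M, M y &
        forall a b, P a -> M b -> R a b]) ->
  exists P Q, [/\ open P, K `<=` P, open Q, L `<=` Q &
        forall a b, P a -> Q b -> R a b].
Proof.
move=> /compact_near_coveringP cL H.
pose D := [set P : set A | open P /\ K `<=` P].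
pose Bs := fun P : set A => [set P' | open P' /\ K `<=` P' /\ P' `<=` P].
have FF : Filter (filter_from D Bs).
  apply: filter_from_filter; first by exists setT; split => //; exact: openT.
  move=> i j [oi Ki] [oj Kj]; exists (i `&` j).
    by split; [exact: openI|move=> x Kx; split; [apply: Ki|apply: Kj]].
  by move=> P' [oP' [KP' sP']]; split; split => //; split => // x /sP' []//.
have [] := cL _ (filter_from D Bs)
  (fun P' y => exists M, [/\ open M, M y & forall a b, P' a -> M b -> R a b]) FF.
- move=> y Ly; have [P [M [oP KP oM My PMR]]] := H y Ly.
  exists (M, Bs P) => /=.
    split; first by apply: open_nbhs_nbhs; split.
    by exists P => //; split.
  move=> [y1 P1] /= [My1 [oP1 [KP1 sP1]]].
  exists M; split => // a b P1a Mb; apply: PMR => //; exact: sP1.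
- move=> P0 [oP0 KP0] sB.
  have LP := sB P0 (conj oP0 (conj KP0 (@subset_refl _ P0))).
  pose Q := \bigcup_(M in [set M | open M /\ forall a b, P0 a -> M b -> R a b]) M.
  exists P0, Q; split => //.
  + by apply: bigcup_open => M [].
  + by move=> y /LP [M [oM My MR]]; exists M.
  + by move=> a b P0a [M [_ MR] Mb]; apply: MR.
Qed.

Lemma tube (A B : topologicalType) (U : set (A * B)) (K : set A) (L : set B) :
  open U -> compact K -> compact L -> K `*` L `<=` U ->
  exists P Q, [/\ open P, K `<=` P, open Q, L `<=` Q & P `*` Q `<=` U].
Proof.
move=> oU cK cL KLU.
have [y Ly|P [Q [oP KP oQ LQ PQ]]] := @tube_half A B (fun a b => U (a, b)) K L cL; last first.
  by exists P, Q; split => // -[a b] [/= Pa Qb]; apply: PQ.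
  have [x Kx|M [P [oM yM oP KP MP]]] := @tube_half B A (fun b a => U (a, b)) [set y] K cK; last first.
    by exists P, M; split => //; [apply: yM|move=> a b Pa Mb; apply: MP].
    have : nbhs (x, y) U.
      by apply: open_nbhs_nbhs; split => //; apply: KLU.
    move=> [[N1 N2] /= [N1x N2y] N12U].
    exists N2°, N1°; split.
    - exact: open_interior.
    - by move=> _ ->.
    - exact: open_interior.
    - exact: N1x.
    - by move=> b a /interior_subset N2b /interior_subset N1a; apply: (N12U (a, b)).
Qed.



Lemma countable_enum T (D : set T) : countable D -> D !=set0 ->
  exists e : nat -> T, D = range e.
Proof.
move=> /pfcard_geP [-> /set0P/eqP//|/surjfunPex [f ->]].
by exists f.
Qed.

Lemma countable_range2 T (g : nat -> nat -> T) :
  countable [set x | exists i j, x = g i j].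
Proof.
have -> : [set x | exists i j, x = g i j] = (fun p : nat * nat => g p.1 p.2) @` setT.
  apply/seteqP; split => x.
    by move=> [i [j ->]]; exists (i, j).
  by move=> [[i j] _ <-]; exists i, j.
apply: card_le_trans (card_image_le _ _) _.
exact: countableP.
Qed.

Lemma nat_pair_surj : exists f : nat -> nat * nat, forall p, exists m, f m = p.
Proof.
have := countableP (@setT (nat * nat)).
move=> /countable_enum [|f Hf]; first by exists (0, 0)%N.
exists f => p; have : (@setT (nat * nat)) p by [].
by rewrite Hf => -[m _ <-]; exists m.
Qed.

Lemma Gdelta_bigcap (T : topologicalType) (U : nat -> nat -> set T) :
  (forall i n, open (U i n)) -> Gdelta (\bigcap_i \bigcap_n U i n).
Proof.
move=> oU; have [f fS] := nat_pair_surj.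
exists (fun m => U (f m).1 (f m).2); split => //.
apply/seteqP; split => x.
  by move=> Hx m _; apply: Hx.
move=> Hx i _ n _; have [m fm] := fS (i, n).
by have := Hx m I; rewrite fm.
Qed.

Lemma Gdelta_open (T : topologicalType) (U : nat -> set T) :
  (forall n, open (U n)) -> Gdelta (\bigcap_n U n).
Proof. by move=> oU; exists U. Qed.




Lemma alster_prod (A B : topologicalType) : Alster A -> Alster B -> Alster (A * B)%type.
Proof.
move=> alA alB C CG Ccov Ccpt.
have [[[a0 b0] _]|nopt] := pselect (exists p : A * B, True); last first.
  exists set0 => //; split => //; apply/seteqP; split => // p _.
  by exfalso; apply: nopt; exists p.
pose dat := fun (K : set A) (L : set B) G (P : nat -> set A) (Q : nat -> set B) =>
  [/\ C G, forall n, open (P n) /\ K `<=` P n, forall n, open (Q n) /\ L `<=` Q n &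
      (\bigcap_n P n) `*` (\bigcap_n Q n) `<=` G].
have step1 : forall K L, compact K -> compact L -> exists G P Q, dat K L G P Q.
  move=> K L cK cL.
  have [G CG' KLG] := Ccpt _ (compact_setX cK cL).
  have [U [oU GU]] := CG G CG'.
  have : forall n, exists PQ : set A * set B, [/\ open PQ.1, K `<=` PQ.1,
      open PQ.2, L `<=` PQ.2 & PQ.1 `*` PQ.2 `<=` U n].
    move=> n; have [P [Q [oP KP oQ LQ PQU]]] := tube (oU n) cK cL
      (subset_trans KLG (fun p Gp => (eq_ind _ (fun S => S p) Gp _ GU) n I)).
    by exists (P, Q).
  move=> /choice [pq Hpq].
  exists G, (fun n => (pq n).1), (fun n => (pq n).2); split => //.
  - by move=> n; have [] := Hpq n.
  - by move=> n; have [] := Hpq n.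
  - move=> [a b] [/= Pa Qb]; rewrite GU => n _.
    by have [_ _ _ _] := Hpq n; apply; split; [apply: Pa|apply: Qb].
have step2 : forall K, compact K -> exists (H : set A) (g : nat -> set (A * B)),
    [/\ Gdelta H, K `<=` H, forall j, C (g j) & H `*` setT `<=` \bigcup_j g j].
  move=> K cK.
  pose CB := [set S : set B | exists L G P Q, compact L /\ dat K L G P Q /\
                                S = \bigcap_n Q n].
  have [] := alB CB.
  - move=> S [L [G [P [Q [_ [[_ _ oQ _] ->]]]]]].
    by apply: Gdelta_open => n; have [] := oQ n.
  - apply/seteqP; split => // y _.
    have [G [P [Q d]]] := step1 K [set y] cK (@compact_set1 B y).
    exists (\bigcap_n Q n); first by exists [set y], G, P, Q; split; [exact: compact_set1|split].
    by move=> n _; have [_ _ oQ _] := d; have [_] := oQ n; apply.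
  - move=> L cL; have [G [P [Q d]]] := step1 K L cK cL.
    exists (\bigcap_n Q n); first by exists L, G, P, Q.
    by move=> y Ly n _; have [_ _ oQ _] := d; have [_] := oQ n; apply.
  move=> D DCB [cD Dcov].
  have [e De] : exists e : nat -> set B, D = range e.
    apply: countable_enum => //.
    have : (\bigcup_(S in D) S) b0 by rewrite Dcov.
    by move=> [S DS _]; exists S.
  have : forall j, exists x : (set B * set (A * B)) * ((nat -> set A) * (nat -> set B)),
      [/\ compact x.1.1, dat K x.1.1 x.1.2 x.2.1 x.2.2 & e j = \bigcap_n x.2.2 n].
    move=> j; have : CB (e j) by apply: DCB; rewrite De; exists j.
    by move=> [L [G [P [Q [cL [d ->]]]]]]; exists ((L, G), (P, Q)).
  move=> /choice [x Hx].
  exists (\bigcap_j \bigcap_n (x j).2.1 n), (fun j => (x j).1.2); split.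
  - by apply: Gdelta_bigcap => j n; have [_ [_ oP _ _] _] := Hx j; have [] := oP n.
  - by move=> a Ka j _ n _; have [_ [_ oP _ _] _] := Hx j; have [_] := oP n; apply.
  - by move=> j; have [_ [] ] := Hx j.
  - move=> [a b] [/= Ha _].
    have : (\bigcup_(S in D) S) b by rewrite Dcov.
    move=> [S]; rewrite De => -[j _ <-] ejb.
    exists j => //; have [_ [_ _ _ PQG] ejQ] := Hx j.
    apply: PQG; split => /=; first by apply: Ha.
    by rewrite -ejQ.
pose CA := [set H : set A | exists K (g : nat -> set (A * B)), compact K /\
   [/\ Gdelta H, K `<=` H, forall j, C (g j) & H `*` setT `<=` \bigcup_j g j]].
have [] := alA CA.
- by move=> H [K [g [_ []]]].
- apply/seteqP; split => // a _.
  have [H [g [GH KH Cg Hg]]] := step2 [set a] (@compact_set1 A a).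
  by exists H; [exists [set a], g; split; [exact: compact_set1|split]|apply: KH].
- move=> K cK; have [H [g [GH KH Cg Hg]]] := step2 K cK.
  by exists H => //; exists K, g; split.
move=> D DCA [cD Dcov].
have [e De] : exists e : nat -> set A, D = range e.
  apply: countable_enum => //.
  have : (\bigcup_(S in D) S) a0 by rewrite Dcov.
  by move=> [S DS _]; exists S.
have : forall i, exists g : nat -> set (A * B),
    (forall j, C (g j)) /\ e i `*` setT `<=` \bigcup_j g j.
  move=> i; have : CA (e i) by apply: DCA; rewrite De; exists i.
  by move=> [K [g [_ [_ _ Cg Hg]]]]; exists g.
move=> /choice [g Hg].
exists [set G | exists i j, G = g i j].
  by move=> G [i [j ->]]; have [] := Hg i.
split; first exact: (countable_range2 g).
apply/seteqP; split => // -[a b] _.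
have : (\bigcup_(S in D) S) a by rewrite Dcov.
move=> [S]; rewrite De => -[i _ <-] eia.
have [_ /(_ (a, b) (conj eia I)) [j _ gij]] := Hg i.
by exists (g i j) => //; exists i, j.
Qed.



Lemma alster_image (A B : topologicalType) (f : A -> B) :
  continuous f -> (forall b, exists a, f a = b) -> Alster A -> Alster B.
Proof.
move=> cf sf alA C CG Ccov Ccpt.
have [] := alA [set f @^-1` G | G in C].
- move=> _ [G CG' <-]; have [U [oU ->]] := CG G CG'.
  exists (fun n => f @^-1` U n); split.
    by move=> n; move/continuousP: cf; apply.
  by rewrite preimage_bigcap.
- apply/seteqP; split => // a _.
  have : (\bigcup_(G in C) G) (f a) by rewrite Ccov.
  by move=> [G CG' Gfa]; exists (f @^-1` G) => //; exists G.
- move=> K cK.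
  have cfK : compact (f @` K).
    by apply: continuous_compact => //; exact: continuous_subspaceT.
  have [G CG' fKG] := Ccpt _ cfK.
  by exists (f @^-1` G); [exists G|move=> a Ka; apply: fKG; exists a].
move=> D DC [cD Dcov].
have : forall S : set A, exists G : set B, D S -> C G /\ S = f @^-1` G.
  move=> S; have [DS|nDS] := pselect (D S); last by exists setT.
  by have [G CG' <-] := DC S DS; exists G.
move=> /choice [h Hh].
exists (h @` D).
  by move=> _ [S DS <-]; have [] := Hh S DS.
split; first exact: (card_le_trans (card_image_le _ _) cD).
apply/seteqP; split => // b _.
have [a <-] := sf b.
have : (\bigcup_(S in D) S) a by rewrite Dcov.
move=> [S DS Sa]; exists (h S); first by exists S.
by have [_ eS] := Hh S DS; rewrite eS in Sa.
Qed.



Lemma continuous_into_power (Z X : topologicalType) k (h : Z -> power X k) :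
  (forall i, continuous (fun z => h z i)) -> continuous h.
Proof.
move=> hc x; apply/cvg_sup.
move=> i; move: x; apply/(@continuousP _ (initial_topology (@^~ i))) => A [B oB <-].
have -> : h @^-1` ((@^~ i) @^-1` B) = (fun z => h z i) @^-1` B by [].
by move/continuousP: (hc i); apply.
Qed.

Lemma power_proj_continuous (X : topologicalType) k (i : 'I_k) :
  continuous (fun f : power X k => f i).
Proof. exact: (@proj_continuous _ (fun _ : 'I_k => X) i). Qed.

Lemma fst_cont (A B : topologicalType) : continuous (@fst A B).
Proof. by move=> p; exact: cvg_fst. Qed.

Lemma snd_cont (A B : topologicalType) : continuous (@snd A B).
Proof. by move=> p; exact: cvg_snd. Qed.

Definition comb (X : topologicalType) k (p : power X k * X) : power X k.+1 :=
  fun i => match unlift ord_max i with Some j => p.1 j | None => p.2 end.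

Lemma comb_continuous (X : topologicalType) k : continuous (@comb X k).
Proof.
apply: (@continuous_into_power (power X k * X)%type X k.+1 (@comb X k)) => i; rewrite /comb.
case: (unlift ord_max i) => [j|]; last exact: snd_cont.
move=> p; exact: (@continuous_comp _ _ _ fst (fun f : power X k => f j) p (@fst_cont _ _ p) (@power_proj_continuous X k j p.1)).
Qed.

Lemma comb_surj (X : topologicalType) k (f : power X k.+1) :
  exists p, @comb X k p = f.
Proof.
exists ((fun j => f (lift ord_max j)), f ord_max).
apply: functional_extensionality_dep => i; rewrite /comb.
by case: unliftP => [j ->|->].
Qed.

Lemma alster_power0 (X : topologicalType) : Alster (power X 0).
Proof.
have x0 : power X 0 by move=> [m]; rewrite ltn0.
have all0 : forall f : power X 0, f = x0.
  by move=> f; apply: functional_extensionality_dep => -[m Hm]; exfalso; rewrite ltn0 in Hm.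
move=> C CG Ccov Ccpt.
have [G CG' x0G] := Ccpt _ (@compact_set1 _ x0).
exists [set G]; first by move=> _ ->.
split; first exact: countable1.
apply/seteqP; split => // f _; exists G => //.
by rewrite (all0 f); apply: x0G.
Qed.



Lemma alster_hurewicz (T : topologicalType) : Alster T -> Hurewicz T.
Proof.
move=> alT U HU.
have [[t0 _]|nopt] := pselect (exists t : T, True); last first.
  exfalso; have [_] := HU 0%N; apply; exists set0 => //; split; first exact: finite_set0.
  apply/seteqP; split => // t _; exfalso; apply: nopt; by exists t.
have : forall K : set T, exists Fk : nat -> set (set T), compact K ->
    forall n, [/\ Fk n `<=` U n, finite_set (Fk n) & K `<=` \bigcup_(V in Fk n) V].
  move=> K; have [cK|ncK] := pselect (compact K); last by exists (fun _ => set0).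
  have : forall n, exists F : set (set T),
      [/\ F `<=` U n, finite_set F & K `<=` \bigcup_(V in F) V].
    move=> n; have [[oU covU] _] := HU n.
    have [F FU [fF KF]] := compact_fincover cK oU (fun x _ => eq_ind_r (fun S => S x) I covU).
    by exists F.
  by move=> /choice [Fk HFk]; exists Fk.
move=> /choice [Fk HFk].
pose G := fun K => \bigcap_n \bigcup_(V in Fk K n) V.
have [] := alT [set G K | K in compact].
- move=> _ [K cK <-]; apply: Gdelta_open => n.
  apply: bigcup_open => V FV; have [[oU _] _] := HU n.
  by apply: oU; have [FU _ _] := HFk K cK n; apply: FU.
- apply/seteqP; split => // t _; exists (G [set t]); first by exists [set t] => //; exact: compact_set1.
  by move=> n _; have [_ _] := HFk [set t] (@compact_set1 _ t) n; apply.
- move=> K cK; exists (G K); first by exists K.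
  by move=> t Kt n _; have [_ _] := HFk K cK n; apply.
move=> D DC [cD Dcov].
have [e De] : exists e : nat -> set T, D = range e.
  apply: countable_enum => //.
  have : (\bigcup_(S in D) S) t0 by rewrite Dcov.
  by move=> [S DS _]; exists S.
have : forall j, exists K, compact K /\ e j = G K.
  move=> j; have : [set G K | K in compact] (e j) by apply: DC; rewrite De; exists j.
  by move=> [K cK <-]; exists K.
move=> /choice [Kj HKj].
pose F := fun n => \bigcup_(j in `I_n.+1) Fk (Kj j) n.
pose W := fun n => \bigcup_(V in F n) V.
have FU : forall n, F n `<=` U n /\ finite_set (F n).
  move=> n; split.
    by move=> V [j _ FV]; have [cK _] := HKj j; have [FU' _ _] := HFk _ cK n; apply: FU'.
  apply: bigcup_finite; first exact: finite_II.
  by move=> j _; have [cK _] := HKj j; have [_ fF _] := HFk _ cK n.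
have tail : forall t, exists j, forall n, (j <= n)%N -> W n t.
  move=> t; have : (\bigcup_(S in D) S) t by rewrite Dcov.
  move=> [S]; rewrite De => -[j _ <-] ejt; exists j => n jn.
  have [cK eG] := HKj j; rewrite eG in ejt.
  have [V FV Vt] := ejt n I.
  by exists V => //; exists j => //=; rewrite ltnS.
exists F; split => //.
split; [split|split].
- by move=> _ [n _ <-]; apply: bigcup_open => V /(proj1 (FU n)) UV; have [[oU _] _] := HU n; apply: oU.
- apply/seteqP; split => // t _; have [j Hj] := tail t.
  by exists (W j); [exists j|apply: Hj].
- move=> finS.
  have : exists W0, range W W0 /\ infinite_set [set n | W n = W0].
    apply: contrapT => nex; apply: infinite_nat.
    have -> : [set: nat] = \bigcup_(W0 in range W) [set n | W n = W0].
      by apply/seteqP; split => // n _; exists (W n) => //; exists n.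
    apply: bigcup_finite => // W0 RW0; apply: contrapT => inf; apply: nex.
    by exists W0.
  move=> [_ [[n0 _ <-] inf]].
  have WT : W n0 = setT.
    apply/seteqP; split => // t _; have [j Hj] := tail t.
    have [n [Wn jn]] : exists n, W n = W n0 /\ (j <= n)%N.
      apply: contrapT => nex; apply: inf.
      apply: (@sub_finite_set _ _ `I_j); last exact: finite_II.
      move=> n Wn; rewrite /=; case: (ltnP n j) => // jn; exfalso; apply: nex.
      by exists n.
    by rewrite -Wn; apply: Hj.
  have [_] := HU n0; apply; exists (F n0); first exact: (proj1 (FU n0)).
  by split; [exact: (proj2 (FU n0))|exact: WT].
- move=> t; have [j Hj] := tail t.
  apply: (@sub_finite_set _ _ (W @` `I_j)); last exact/finite_image/finite_II.
  move=> _ [[n _ <-] nW]; exists n => //=.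
  by rewrite /=; case: (ltnP n j) => // jn; exfalso; apply: nW; apply: Hj.
Qed.


Lemma alster_power (X : topologicalType) : Alster X -> forall k, Alster (power X k).
Proof.
move=> alX; elim=> [|k IH]; first exact: alster_power0.
apply: (@alster_image (power X k * X)%type _ (@comb X k)).
- exact: comb_continuous.
- exact: comb_surj.
- exact: alster_prod.
Qed.

Theorem corollary2p4 (X : topologicalType) :
  Alster X -> forall k : nat, (0 < k)%N -> Hurewicz (power X k).
Proof.
by move=> alX k _; apply: alster_hurewicz; apply: alster_power.
Qed.
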